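(* Let $n\ge \max\{m,p\}$ be positive integers, $A\in\mathbb{R}^{n\times n}$ and $E\in\mathbb{R}^{p\times p}$ symmetric positive definite, $B\in\mathbb{R}^{m\times n}$ of full row rank, $C\in\mathbb{R}^{p\times m}$ of full rank, $D\in\mathbb{R}^{m\times m}$ symmetric positive semidefinite, and $\widehat A,\widehat S,\widehat X$ symmetric positive definite of sizes $n,m,p$. Let $$\mathcal{A}=\begin{bmatrix}A&B^T&0\\ B&-D&C^T\\ 0&C&E\end{bmatrix},\qquad \mathcal{P}=\begin{bmatrix}\widehat A&B^T&0\\ 0&-\widehat S&C^T\\ 0&0&\widehat X\end{bmatrix}.$$ Set $\overline A=\widehat A^{-1/2}A\widehat A^{-1/2}$, $\overline D=\widehat S^{-1/2}D\widehat S^{-1/2}$, $\overline E=\widehat X^{-1/2}E\widehat X^{-1/2}$, $R=\widehat S^{-1/2}B\widehat A^{-1/2}$, $K=\widehat X^{-1/2}C\widehat S^{-1/2}$, $\widetilde S=D+B\widehat A^{-1}B^T$, $\widetilde X=E+C\widehat S^{-1}C^T$, and define $\gamma^A_{\min/\max}=\lambda_{\min/\max}(\widehat A^{-1}A)$, $\gamma^S_{\max}=\lambda_{\max}(\widehat S^{-1}\widetilde S)$, $\gamma^X_{\max}=\lambda_{\max}(\widehat X^{-1}\widetilde X)$, $\gamma^D_{\max}=\lambda_{\max}(\widehat S^{-1}D)$, $\gamma^E_{\min}=\lambda_{\min}(\widehat X^{-1}E)$, $\gamma^R_{\min}=\lambda_{\min}(RR^T)$. Assume $1\in[\gamma^A_{\min},\gamma^A_{\max}]$.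 Let $\lambda$ be a real eigenvalue of $\mathcal{A}\mathcal{P}^{-1}$ with $$\lambda\notin\left[\min\left\{\gamma^A_{\min},\frac{\gamma^R_{\min}}{\gamma^A_{\max}+\gamma^R_{\min}+\gamma^D_{\max}}\right\},\ \gamma^A_{\max}+\gamma^S_{\max}\right].$$ Then there are numbers $\gamma_A=q(\overline A,w_1)$, $\gamma_R=q(RR^T,w_2)$, $\gamma_D=q(\overline D,w_2)$, $\gamma_K=q(KK^T,w_3)$, $\gamma_E=q(\overline E,w_3)$ for some nonzero real vectors $w_1,w_2,w_3$ of appropriate sizes, such that, with $\gamma_S=\gamma_R+\gamma_D$ and $\gamma_X=\gamma_K+\gamma_E$, $\lambda$ satisfies $$\lambda^3-(\gamma_A+\gamma_S+\gamma_X)\lambda^2+(\gamma_A\gamma_X+\gamma_K+\gamma_E\gamma_S+\gamma_D\gamma_A+\gamma_R)\lambda-(\gamma_A\gamma_K+\gamma_E\gamma_A\gamma_D+\gamma_E\gamma_R)=0,$$ and moreover $$\min\left\{\gamma^E_{\min},\gamma^A_{\min},\frac{\gamma^R_{\min}}{\gamma^A_{\max}+\gamma^R_{\min}+\gamma^D_{\max}}\right\}\le\lambda\le\gamma^A_{\max}+\gamma^S_{\max}+\gamma^X_{\max}.$$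
   Context: For a square matrix $H$ and nonzero vector $w$, $q(H,w)=\frac{w^*Hw}{w^*w}$ is the Rayleigh quotient. $\lambda_{\min}$, $\lambda_{\max}$ denote smallest and largest eigenvalues. The assumption $1\in[\gamma^A_{\min},\gamma^A_{\max}]$ is a standing assumption of the paper's analysis. *)

(* Defs.v *)
From HB Require Import structures.
From mathcomp Require Import all_boot all_order all_algebra.
From mathcomp Require Import reals.
Set Implicit Arguments. Unset Strict Implicit. Unset Printing Implicit Defensive.
Import Order.TTheory GRing.Theory Num.Theory.
Local Open Scope ring_scope.

Section Defs.
Variable R : realType.

Definition spd (k : nat) (M : 'M[R]_k) : Prop :=
  M^T = M /\ forall x : 'cV[R]_k, x != 0 -> 0 < (x^T *m M *m x) 0 0.
Definition spsd (k : nat) (M : 'M[R]_k) : Prop :=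
  M^T = M /\ forall x : 'cV[R]_k, 0 <= (x^T *m M *m x) 0 0.

Definition is_inv_sqrt (k : nat) (M Y : 'M[R]_k) : Prop :=
  spd Y /\ Y *m Y = invmx M.

Definition rayleigh (k : nat) (H : 'M[R]_k) (w : 'cV[R]_k) : R :=
  (w^T *m H *m w) 0 0 / (w^T *m w) 0 0.

Definition is_lambda_min (k : nat) (M : 'M[R]_k) (l : R) : Prop :=
  eigenvalue M l /\ forall mu, eigenvalue M mu -> l <= mu.
Definition is_lambda_max (k : nat) (M : 'M[R]_k) (l : R) : Prop :=
  eigenvalue M l /\ forall mu, eigenvalue M mu -> mu <= l.

Definition calA (n m p : nat) (A : 'M[R]_n) (B : 'M[R]_(m, n)) (C : 'M[R]_(p, m))
  (D : 'M[R]_m) (E : 'M[R]_p) : 'M[R]_(n + m + p) :=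
  block_mx (block_mx A B^T B (- D)) (col_mx (0 : 'M[R]_(n, p)) C^T)
           (row_mx (0 : 'M[R]_(p, n)) C) E.

Definition calP (n m p : nat) (Ah : 'M[R]_n) (B : 'M[R]_(m, n)) (C : 'M[R]_(p, m))
  (Sh : 'M[R]_m) (Xh : 'M[R]_p) : 'M[R]_(n + m + p) :=
  block_mx (block_mx Ah B^T (0 : 'M[R]_(m, n)) (- Sh)) (col_mx (0 : 'M[R]_(n, p)) C^T)
           (0 : 'M[R]_(p, n + m)) Xh.

End Defs.

(* Main.v *)
Require Import Defs.
From HB Require Import structures.
From mathcomp Require Import all_boot all_order all_algebra.
From mathcomp Require Import reals ring lra complex spectral.
Import Order.TTheory GRing.Theory Num.Theory.
Set Implicit Arguments. Unset Strict Implicit. Unset Printing Implicit Defensive.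
Local Open Scope ring_scope.

Notation dotv x y := ((x^T *m y) 0 0).
Notation qf H x y := ((x^T *m H *m y) 0 0).

Lemma spec_le (R : realType) k (H : 'M[R]_k) (t : R) :
  H^T = H -> (forall mu, eigenvalue H mu -> mu <= t) ->
  forall x : 'cV[R]_k, (x^T *m H *m x) 0 0 <= t * (x^T *m x) 0 0.
Proof.
move=> Hs Heig x.
pose f := real_complex R.
pose Hc := map_mx f H.
have Hreal : Hc \is a realmx.
  by apply/mxOverP => i j; rewrite mxE; apply/complex_realP; exists (H i j).
have Hsym : Hc \is symmetricmx.
  apply/is_hermitianmxP; rewrite expr0 scale1r map_mx_id // /Hc map_trmx Hs.
  done.
have Hherm := realsym_hermsym Hsym Hreal.
have /orthomx_spectralP Hdec := hermitian_normalmx Hherm.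
have dreal := hermitian_spectral_diag_real Hherm.
move: Hdec.
set P := spectralmx Hc; set d := spectral_diag Hc => Hdec.
have Pu : P \is unitarymx by apply: spectral_unitarymx.
have Punit : P \in unitmx by apply: spectral_unit.
have dle : forall i, d 0 i <= t%:C%C.
  move=> i.
  have /complex_realP [r dr] : d 0 i \is Num.real by apply: (mxOverP dreal).
  have eigHc : eigenvalue Hc (d 0 i).
    apply/eigenvalueP; exists (row i P).
      rewrite {1}Hdec rowE !mulmxA mulmxK // -[_ *m diag_mx d]rowE row_diag_mx.
      by rewrite -scalemxAl.
    apply/eqP => /(congr1 (mulmx^~ (invmx P))).
    rewrite rowE mulmxK // mul0mx => /matrixP /(_ 0 i).
    by rewrite !mxE !eqxx /= => /eqP; rewrite oner_eq0.
  rewrite dr lecR; apply: Heig.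
  move: eigHc; rewrite dr !eigenvalue_root_char /Hc -map_char_poly.
  by rewrite fmorph_root.
pose xc := map_mx f x.
pose yv := P *m xc.
have xcr : map_mx Num.conj (xc^T) = xc^T.
  by apply/matrixP => i j; rewrite !mxE /f conj_Creal //; apply/complex_realP; eexists.
have E1 : xc^T *m map_mx Num.conj (P^T) = map_mx Num.conj (yv^T).
  by rewrite /yv trmx_mul map_mxM xcr map_trmx.
have PtP : map_mx Num.conj (P^T) *m P = 1%:M.
  by rewrite -invmx_unitary // mulVmx.
have L : ((x^T *m H *m x) 0 0)%:C%C = \sum_j (yv j 0)^* * d 0 j * yv j 0.
  have -> : ((x^T *m H *m x) 0 0)%:C%C = (map_mx f (x^T *m H *m x)) 0 0 by rewrite [RHS]mxE.
  rewrite !map_mxM -map_trmx.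
  rewrite -/xc -/Hc {1}Hdec invmx_unitary // !mulmxA E1 -!mulmxA -/yv mulmxA mul_mx_diag.
  by rewrite !mxE; apply: eq_bigr => j _; rewrite !mxE.
have Rr : ((x^T *m x) 0 0)%:C%C = \sum_j (yv j 0)^* * yv j 0.
  have -> : ((x^T *m x) 0 0)%:C%C = (map_mx f (x^T *m x)) 0 0 by rewrite [RHS]mxE.
  rewrite !map_mxM -map_trmx.
  rewrite -/xc (_ : xc^T *m xc = xc^T *m (map_mx Num.conj (P^T) *m P) *m xc); last by rewrite PtP mulmx1.
  rewrite !mulmxA E1 -mulmxA -/yv.
  by rewrite !mxE; apply: eq_bigr => j _; rewrite !mxE.
rewrite -lecR rmorphM /= L Rr mulr_sumr; apply: ler_sum => j _.
rewrite mulrAC [_ * yv j 0]mulrC [t%:C%C * _]mulrC ler_wpM2l //.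
exact: mul_conjC_ge0.
Qed.

Section Basic.
Variable R : realType.

Lemma dotvC k (x y : 'cV[R]_k) : dotv x y = dotv y x.
Proof. by rewrite !mxE; apply: eq_bigr => i _; rewrite !mxE mulrC. Qed.

Lemma qfC k (H : 'M[R]_k) (x y : 'cV[R]_k) : H^T = H -> qf H x y = qf H y x.
Proof.
move=> HT; transitivity ((x^T *m H *m y)^T 0 0); first by rewrite [RHS]mxE.
by rewrite !trmx_mul trmxK HT mulmxA.
Qed.

Lemma qf_conj k l (Y : 'M[R]_(k, l)) (G : 'M[R]_l) (x y : 'cV[R]_k) :
  qf (Y *m G *m Y^T) x y = qf G (Y^T *m x) (Y^T *m y).
Proof. by rewrite trmx_mul trmxK !mulmxA. Qed.

Lemma dotv_qf1 k (x y : 'cV[R]_k) : dotv x y = qf 1%:M x y.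
Proof. by rewrite mulmx1. Qed.

Lemma qf_scal k (a : R) (x y : 'cV[R]_k) : qf a%:M x y = a * dotv x y.
Proof. by rewrite mul_mx_scalar -scalemxAl mxE. Qed.

Lemma qfDm k (H1 H2 : 'M[R]_k) (x y : 'cV[R]_k) : qf (H1 + H2) x y = qf H1 x y + qf H2 x y.
Proof. by rewrite mulmxDr mulmxDl mxE. Qed.

Lemma qfNm k (H : 'M[R]_k) (x y : 'cV[R]_k) : qf (- H) x y = - qf H x y.
Proof. by rewrite mulmxN mulNmx mxE. Qed.

Lemma qfBm k (H1 H2 : 'M[R]_k) (x y : 'cV[R]_k) : qf (H1 - H2) x y = qf H1 x y - qf H2 x y.
Proof. by rewrite qfDm qfNm. Qed.

Lemma qfZm k a (H : 'M[R]_k) (x y : 'cV[R]_k) : qf (a *: H) x y = a * qf H x y.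
Proof. by rewrite -scalemxAr -scalemxAl mxE. Qed.

Lemma qfDl k (H : 'M[R]_k) (x1 x2 y : 'cV[R]_k) : qf H (x1 + x2) y = qf H x1 y + qf H x2 y.
Proof. by rewrite linearD /= !mulmxDl mxE. Qed.

Lemma qfDr k (H : 'M[R]_k) (x y1 y2 : 'cV[R]_k) : qf H x (y1 + y2) = qf H x y1 + qf H x y2.
Proof. by rewrite mulmxDr mxE. Qed.

Lemma qfZl k (H : 'M[R]_k) a (x y : 'cV[R]_k) : qf H (a *: x) y = a * qf H x y.
Proof. by rewrite linearZ /= -!scalemxAl mxE. Qed.

Lemma qfZr k (H : 'M[R]_k) a (x y : 'cV[R]_k) : qf H x (a *: y) = a * qf H x y.
Proof. by rewrite -scalemxAr mxE. Qed.

Lemma qfMr k (H : 'M[R]_k) (x y : 'cV[R]_k) : qf H x y = dotv x (H *m y).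
Proof. by rewrite mulmxA. Qed.

Lemma qfMl k (H : 'M[R]_k) (x y : 'cV[R]_k) : H^T = H -> qf H x y = dotv (H *m x) y.
Proof. by move=> HT; rewrite trmx_mul HT. Qed.

Lemma dot_ge0 k (x : 'cV[R]_k) : 0 <= dotv x x.
Proof. by rewrite mxE sumr_ge0 // => i _; rewrite !mxE -expr2 sqr_ge0. Qed.

Lemma dot_eq0 k (x : 'cV[R]_k) : (dotv x x == 0) = (x == 0).
Proof.
apply/idP/idP; last by move/eqP->; rewrite mulmx0 mxE.
rewrite mxE => /eqP/psumr_eq0P H0.
have nn : forall i : 'I_k, true -> 0 <= x^T 0 i * x i 0.
  by move=> i _; rewrite mxE -expr2 sqr_ge0.
have {}H0 := H0 nn.
apply/eqP/matrixP => i j.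
rewrite ord1 mxE; have := H0 i isT; rewrite !mxE -expr2 => /eqP.
by rewrite sqrf_eq0 => /eqP.
Qed.

Lemma dot_gt0 k (x : 'cV[R]_k) : x != 0 -> 0 < dotv x x.
Proof. by move=> nx; rewrite lt_def dot_eq0 nx dot_ge0. Qed.

Lemma qf_expand k (G : 'M[R]_k) (x z : 'cV[R]_k) s : G^T = G ->
  qf G (x + s *: z) (x + s *: z) = qf G x x + 2 * s * qf G x z + s ^+ 2 * qf G z z.
Proof.
move=> GT; rewrite qfDl !qfDr !qfZl !qfZr (qfC z x GT); ring.
Qed.

Lemma disc_le (a b c : R) : 0 <= c ->
  (forall s, 0 <= a + 2 * s * b + s ^+ 2 * c) -> b ^+ 2 <= a * c.
Proof.
move=> cge H.
have [c0|c0] := eqVneq c 0.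
  have [b0|b0] := eqVneq b 0; first by rewrite b0 c0 expr0n /= mulr0.
  have h := H (- (a + 1) / (2 * b)).
  have e : 2 * (- (a + 1) / (2 * b)) * b = - (a + 1) by field.
  by move: h; rewrite e c0 mulr0 addr0; lra.
have cgt : 0 < c by rewrite lt_def c0.
have h := H (- b / c).
have e : a + 2 * (- b / c) * b + (- b / c) ^+ 2 * c = a - b ^+ 2 / c by field.
move: h; rewrite e subr_ge0 ler_pdivrMr //.
Qed.

Lemma quad_root (f1 be f2 : R) : f1 < 0 -> 0 < f2 ->
  exists s, f1 + 2 * s * be + s ^+ 2 * f2 = 0.
Proof.
move=> f1n f2p.
have dp : 0 <= be ^+ 2 - f1 * f2 by nra.
exists ((- be + Num.sqrt (be ^+ 2 - f1 * f2)) / f2).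
have sq := sqr_sqrtr dp.
set r := Num.sqrt _ in sq *.
have f2n : f2 != 0 by rewrite gt_eqF.
apply: (mulfI f2n); rewrite mulr0.
have -> : f2 * (f1 + 2 * ((- be + r) / f2) * be + ((- be + r) / f2) ^+ 2 * f2)
  = f2 * f1 + 2 * (- be + r) * be + (- be + r) ^+ 2 by field.
rewrite sqrrD sqrrN sq; ring.
Qed.

Lemma CS k (G : 'M[R]_k) (x z : 'cV[R]_k) : G^T = G -> (forall w : 'cV[R]_k, 0 <= qf G w w) ->
  (qf G x z) ^+ 2 <= qf G x x * qf G z z.
Proof.
move=> GT Gp; apply: disc_le; first exact: Gp.
by move=> s; rewrite -qf_expand //; exact: Gp.
Qed.

Lemma nr_zero k (G : 'M[R]_k) (x1 x2 : 'cV[R]_k) : G^T = G -> x1 != 0 -> x2 != 0 ->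
  qf G x1 x1 <= 0 -> 0 <= qf G x2 x2 -> exists w : 'cV[R]_k, w != 0 /\ qf G w w = 0.
Proof.
move=> GT x1n x2n f1 f2.
have [e1|e1] := eqVneq (qf G x1 x1) 0; first by exists x1.
have [e2|e2] := eqVneq (qf G x2 x2) 0; first by exists x2.
have f1n : qf G x1 x1 < 0 by rewrite lt_neqAle e1 f1.
have f2p : 0 < qf G x2 x2 by rewrite lt_neqAle eq_sym e2 f2.
have [s hs] := quad_root (qf G x1 x2) f1n f2p.
exists (x1 + s *: x2); split; last by rewrite qf_expand.
apply/negP => /eqP w0.
have : x1 = - s *: x2 by rewrite scaleNr; apply/eqP; rewrite -subr_eq0 opprK w0.
move=> ex1; move: f1n; rewrite ex1 qfZl qfZr mulrA mulrNN -expr2.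
by rewrite ltNge mulr_ge0 ?sqr_ge0 // ltW.
Qed.

Lemma unit_def k (H : 'M[R]_k) : (forall w : 'cV[R]_k, w != 0 -> qf H w w != 0) ->
  H \in unitmx.
Proof.
move=> Hd; rewrite unitmxE unitfE; apply/negP => /det0P [v vn vH].
have := Hd (v^T); rewrite trmxK vH mul0mx mxE eqxx.
by rewrite trmx_eq0 vn => /(_ isT).
Qed.

Lemma inv_ray k (H : 'M[R]_k) (y : 'cV[R]_k) : H^T = H ->
  (forall w : 'cV[R]_k, w != 0 -> 0 < qf H w w) -> y != 0 ->
  exists w : 'cV[R]_k, w != 0 /\ qf H w w * qf (invmx H) y y = dotv y y * dotv w w.
Proof.
move=> HT Hp yn.
have Hu : H \in unitmx by apply: unit_def => w wn; rewrite gt_eqF // Hp.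
have Hpsd : forall w : 'cV[R]_k, 0 <= qf H w w.
  move=> w; have [->|wn] := eqVneq w 0; last by rewrite ltW // Hp.
  by rewrite mulmx0 mxE.
pose u := invmx H *m y.
have Huy : H *m u = y by rewrite /u mulKVmx.
have un : u != 0 by apply: contraNneq yn => u0; rewrite -Huy u0 mulmx0.
have e1 : qf (invmx H) y y = dotv y u by rewrite -mulmxA.
have e2 : qf H u u = dotv y u by rewrite qfMr Huy dotvC.
have e3 : qf H u y = dotv y y by rewrite qfMl // Huy.
have Qp : 0 < dotv y u by rewrite -e2 Hp.
pose t := dotv y y / dotv y u.
have GT : (H - t%:M)^T = H - t%:M by rewrite linearB /= tr_scalar_mx HT.
have [w [wn hw]] : exists w : 'cV[R]_k, w != 0 /\ qf (H - t%:M) w w = 0.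
  apply: (nr_zero GT un yn).
    rewrite qfBm qf_scal e2 subr_le0 /t mulrAC ler_pdivlMr // -expr2.
    have := @CS _ 1%:M y u (trmx1 _ _) (fun w => ltac:(rewrite mulmx1; exact: dot_ge0)).
    by rewrite !mulmx1.
  rewrite qfBm qf_scal subr_ge0 /t mulrAC ler_pdivrMr // -expr2 -e3 -e2.
  by rewrite mulrC; apply: CS.
exists w; split => //.
move: hw; rewrite qfBm qf_scal => /eqP; rewrite subr_eq0 => /eqP ->.
by rewrite e1 /t mulrAC divfK ?gt_eqF // mulrC.
Qed.

Lemma inv_ray_neg k (H : 'M[R]_k) (y : 'cV[R]_k) : H^T = H ->
  (forall w : 'cV[R]_k, w != 0 -> qf H w w < 0) -> y != 0 ->
  exists w : 'cV[R]_k, w != 0 /\ qf H w w * qf (invmx H) y y = dotv y y * dotv w w.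
Proof.
move=> HT Hn yn.
have NT : (- H)^T = - H by rewrite linearN /= HT.
have [w [wn hw]] : exists w : 'cV[R]_k, w != 0 /\ qf (- H) w w * qf (invmx (- H)) y y = dotv y y * dotv w w.
  by apply: inv_ray => // w wn; rewrite qfNm oppr_gt0 Hn.
have Hu : H \in unitmx by apply: unit_def => w' wn'; rewrite lt_eqF // Hn.
exists w; split => //; move: hw.
have eN : - H = (-1) *: H by rewrite scaleN1r.
rewrite eN invmxZ ?unitmxZ ?unitrN1 // invrN1 !qfZm.
by rewrite !mulN1r mulrNN.
Qed.

End Basic.

Section Sc.
Variable R : realType.
Definition cub (l gA gR gD gK gE : R) :=
  l ^+ 3 - (gA + (gR + gD) + (gK + gE)) * l ^+ 2
      + (gA * (gK + gE) + gK + gE * (gR + gD) + gD * gA + gR) * l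
      - (gA * gK + gE * gA * gD + gE * gR).

Lemma cubic_alg (l gA gR gD gK gE d2 d3 P2 G : R) : d2 != 0 -> d3 != 0 ->
  (gA - l) * P2 = gR * d2 ->
  ((l - gD) * d2 + (l - 1) * P2) * G = gK * d3 * d2 ->
  (l - gE) * d3 = (l - 1) * G -> cub l gA gR gD gK gE = 0.
Proof.
move=> d2n d3n h1 h2 h3.
have : cub l gA gR gD gK gE * (d2 * d3) = 0.
  transitivity ((l - gA) * (((l - gD) * d2 + (l - 1) * P2) * ((l - gE) * d3 - (l - 1) * G)
     + (l - 1) * (((l - gD) * d2 + (l - 1) * P2) * G - gK * d3 * d2))
     + (l - 1) * (l - gE) * d3 * ((gA - l) * P2 - gR * d2)).
    rewrite /cub; ring.
  by rewrite h1 h2 h3 !subrr; ring.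
by move/eqP; rewrite !mulf_eq0 (negbTE d2n) (negbTE d3n) !orbF => /eqP.
Qed.

Lemma cub_ub (l gA gR gD gK gE : R) : 0 <= gA -> 0 <= gR -> 0 <= gD -> 0 <= gK -> 0 <= gE ->
  cub l gA gR gD gK gE = 0 -> l <= gA + (gR + gD) + (gK + gE).
Proof.
move=> hA hR hD hK hE hc.
set s1 := gA + (gR + gD) + (gK + gE).
set s2 := gA * (gK + gE) + gK + gE * (gR + gD) + gD * gA + gR.
set s3 := gA * gK + gE * gA * gD + gE * gR.
have s1g : 0 <= s1 by rewrite /s1; lra.
have s2g : 0 <= s2.
  rewrite /s2; have := mulr_ge0 hA (addr_ge0 hK hE); have := mulr_ge0 hE (addr_ge0 hR hD).
  have := mulr_ge0 hD hA; lra.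
have key : s3 <= s1 * s2.
  rewrite -subr_ge0.
  have -> : s1 * s2 - s3 = gA * (gA * (gK + gE) + gE * (gR + gD) + gD * gA + gR)
     + (gR + gD) * s2 + gK * s2 + gE * (gA * (gK + gE) + gK + gE * (gR + gD)) by rewrite /s1 /s2 /s3; ring.
  apply: addr_ge0; last first.
    apply: mulr_ge0 => //; repeat apply: addr_ge0 => //; apply: mulr_ge0 => //; lra.
  repeat apply: addr_ge0 => //; try (apply: mulr_ge0 => //; lra).
  apply: mulr_ge0 => //; repeat apply: addr_ge0 => //; apply: mulr_ge0 => //; lra.
rewrite leNgt; apply/negP => lt.
have l0 : 0 < l by lra.
move: hc; rewrite /cub -/s1 -/s2 -/s3 => hc.
have : 0 < l ^+ 2 * (l - s1) + (s2 * l - s3).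
  apply: ltr_pwDl; first by apply: mulr_gt0; [exact: exprn_gt0|lra].
  have : s2 * s1 <= s2 * l by rewrite ler_wpM2l // ltW.
  lra.
have -> : l ^+ 2 * (l - s1) + (s2 * l - s3) = l ^+ 3 - s1 * l ^+ 2 + s2 * l - s3 by ring.
by rewrite hc ltxx.
Qed.
End Sc.

Section Core.
Variable R : realType.

Definition defin k (H : 'M[R]_k) := (forall w : 'cV[R]_k, w != 0 -> 0 < qf H w w) \/
   (forall w : 'cV[R]_k, w != 0 -> qf H w w < 0).

Lemma defin_unit k (H : 'M[R]_k) : defin H -> H \in unitmx.
Proof.
case=> Hd; apply: unit_def => w wn; first by rewrite gt_eqF // Hd.
by rewrite lt_eqF // Hd.
Qed.

Lemma defin_ray k (H : 'M[R]_k) (y : 'cV[R]_k) : H^T = H -> defin H -> y != 0 ->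
  exists w : 'cV[R]_k, w != 0 /\ qf H w w * qf (invmx H) y y = dotv y y * dotv w w.
Proof. by move=> HT [Hd|Hd] yn; [apply: inv_ray | apply: inv_ray_neg]. Qed.

Lemma nz_vec k : (0 < k)%N -> exists w : 'cV[R]_k, w != 0.
Proof.
move=> kp; exists (const_mx 1); apply/eqP => /matrixP /(_ (Ordinal kp) 0).
by rewrite !mxE => /eqP; rewrite oner_eq0.
Qed.

Lemma lin1 k (X Y Z : 'cV[R]_k) l : X + Y = l *: (Z + Y) -> X - l *: Z = (l - 1) *: Y.
Proof. by move/matrixP => h; apply/matrixP => i j; have := h i j; rewrite !mxE; lra. Qed.

Lemma lin2 k (X Y Z W : 'cV[R]_k) l : X - Y + Z = l *: (- W + Z) -> l *: W - Y + X = (l - 1) *: Z.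
Proof. by move/matrixP => h; apply/matrixP => i j; have := h i j; rewrite !mxE; lra. Qed.

Lemma lin3 k (X Y Z : 'cV[R]_k) l : X + Y = l *: Z -> X = l *: Z - Y.
Proof. by move/matrixP => h; apply/matrixP => i j; have := h i j; rewrite !mxE; lra. Qed.

Lemma dotBr k (x y z : 'cV[R]_k) : dotv x (y - z) = dotv x y - dotv x z.
Proof. by rewrite mulmxBr !mxE. Qed.

Lemma dotZr k (x y : 'cV[R]_k) a : dotv x (a *: y) = a * dotv x y.
Proof. by rewrite -scalemxAr mxE. Qed.

Lemma qfRR k l (Y : 'M[R]_(k, l)) (w : 'cV[R]_k) : qf (Y *m Y^T) w w = dotv (Y^T *m w) (Y^T *m w).
Proof. by rewrite trmx_mul trmxK !mulmxA. Qed.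

Lemma ray_mul k (H : 'M[R]_k) (w : 'cV[R]_k) : w != 0 -> qf H w w = rayleigh H w * dotv w w.
Proof. by move=> wn; rewrite /rayleigh divfK // gt_eqF // dot_gt0. Qed.

Lemma core_flow k1 k2 k3 (Ab : 'M[R]_k1) (Rm : 'M[R]_(k2,k1)) (Db : 'M[R]_k2)
  (Km : 'M[R]_(k3,k2)) (Eb : 'M[R]_k3) (gAmin l : R) (a : 'cV[R]_k1) (b : 'cV[R]_k2) (c : 'cV[R]_k3) :
  (0 < k1)%N -> (0 < k2)%N -> Ab^T = Ab -> Db^T = Db -> Eb^T = Eb -> l != 1 ->
  (forall w : 'cV[R]_k2, w != 0 -> Rm^T *m w != 0) ->
  defin (Ab - l%:M) ->
  defin (l%:M - Db + (l - 1) *: (Rm *m invmx (Ab - l%:M) *m Rm^T)) ->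
  ((forall w : 'cV[R]_k2, w != 0 ->
     qf (l%:M - Db + (l - 1) *: (Rm *m invmx (Ab - l%:M) *m Rm^T)) w w < 0) /\ l < 1)
   \/ gAmin <= l ->
  Ab *m a + Rm^T *m b = l *: (a + Rm^T *m b) ->
  Rm *m a - Db *m b + Km^T *m c = l *: (- b + Km^T *m c) ->
  Km *m b + Eb *m c = l *: c ->
  (a != 0) || (b != 0) || (c != 0) ->
  exists (w1 : 'cV[R]_k1) (w2 : 'cV[R]_k2) (w3 : 'cV[R]_k3),
    [/\ w1 != 0, w2 != 0 & w3 != 0] /\
    cub l (rayleigh Ab w1) (rayleigh (Rm *m Rm^T) w2) (rayleigh Db w2)
          (rayleigh (Km *m Km^T) w3) (rayleigh Eb w3) = 0 /\
    (rayleigh Eb w3 <= l \/ gAmin <= l).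
Proof.
move=> k1p k2p AbT DbT EbT l1 Rinj.
set M := Ab - l%:M.
set N := l%:M - Db + _.
move=> dM dN Hfin S1 S2 S3 nz.
have MT : M^T = M by rewrite /M linearB /= tr_scalar_mx AbT.
have Mu := defin_unit dM.
have NT : N^T = N.
  rewrite /N linearD linearB /= tr_scalar_mx DbT linearZ /= !trmx_mul trmxK trmx_inv MT.
  by rewrite mulmxA.
have Nu := defin_unit dN.
have l1n : l - 1 != 0 by rewrite subr_eq0.
have EM : M *m a = (l - 1) *: (Rm^T *m b).
  by rewrite /M mulmxBl mul_scalar_mx; apply: lin1.
have ea : a = (l - 1) *: (invmx M *m (Rm^T *m b)).
  by rewrite scalemxAr -EM mulKmx.
have eRa : Rm *m a = (l - 1) *: (Rm *m invmx M *m Rm^T *m b).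
  by rewrite {1}ea -scalemxAr !mulmxA.
have EN : N *m b = (l - 1) *: (Km^T *m c).
  rewrite /N !mulmxDl mulNmx mul_scalar_mx -scalemxAl -eRa.
  exact: lin2.
have [b0|bn] := eqVneq b 0.
  have a0 : a = 0 by rewrite ea b0 !mulmx0 scaler0.
  have g0 : Km^T *m c = 0.
    move: EN; rewrite b0 mulmx0 => /esym/eqP; rewrite scaler_eq0 (negbTE l1n) /=.
    by move/eqP.
  have cn : c != 0 by move: nz; rewrite a0 b0 !eqxx.
  have Ec : Eb *m c = l *: c by move: S3; rewrite b0 mulmx0 add0r.
  have [w1 w1n] := nz_vec k1p.
  have [w2 w2n] := nz_vec k2p.
  exists w1, w2, c; split; first by split.
  have d3p := dot_gt0 cn.
  have gE : rayleigh Eb c = l by rewrite /rayleigh qfMr Ec dotZr mulfK // gt_eqF.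
  have gK : rayleigh (Km *m Km^T) c = 0 by rewrite /rayleigh qfRR g0 mulmx0 mxE mul0r.
  split; last by left; rewrite gE.
  by rewrite gE gK /cub; ring.
have cgn : Km^T *m c != 0.
  apply/eqP => g0; move: EN; rewrite g0 scaler0 => Nb0.
  by move: bn; rewrite -(mulKmx Nu b) Nb0 mulmx0 eqxx.
have cn : c != 0 by apply: contraNneq cgn => ->; rewrite mulmx0.
set g := Km^T *m c in cgn EN.
have eb : b = (l - 1) *: (invmx N *m g) by rewrite scalemxAr -EN mulKmx.
have [w2 [w2n hw2]] := defin_ray NT dN cgn.
have y2n := Rinj w2 w2n.
set y2 := Rm^T *m w2 in y2n.
have [w1 [w1n hw1]] := defin_ray MT dM y2n.
exists w1, w2, c; split; first by split.
set gA := rayleigh Ab w1; set gR := rayleigh (Rm *m Rm^T) w2; set gD := rayleigh Db w2.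
set gK := rayleigh (Km *m Km^T) c; set gE := rayleigh Eb c.
have d1p := dot_gt0 w1n; have d2p := dot_gt0 w2n; have d3p := dot_gt0 cn.
have qA := ray_mul Ab w1n; have qR := ray_mul (Rm *m Rm^T) w2n; have qD := ray_mul Db w2n.
have qK := ray_mul (Km *m Km^T) cn; have qE := ray_mul Eb cn.
rewrite -/gA in qA; rewrite -/gR in qR; rewrite -/gD in qD; rewrite -/gK in qK; rewrite -/gE in qE.
have qM : qf M w1 w1 = (gA - l) * dotv w1 w1 by rewrite /M qfBm qf_scal qA mulrBl.
have qN : qf N w2 w2 = (l - gD) * dotv w2 w2 + (l - 1) * qf (invmx M) y2 y2.
  by rewrite /N qfDm qfBm qf_scal qfZm qf_conj qD -/y2 [(l - gD) * _]mulrBl.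
have dy2 : dotv y2 y2 = gR * dotv w2 w2 by rewrite -qR qfRR.
have dg : dotv g g = gK * dotv c c by rewrite -qK qfRR.
have h3 : (l - gE) * dotv c c = (l - 1) * qf (invmx N) g g.
  have Kb : Km *m b = l *: c - Eb *m c by apply: lin3.
  have e : dotv c (Km *m b) = dotv g b by rewrite /g trmx_mul trmxK mulmxA.
  move: e; rewrite {1}Kb {1}eb dotBr dotZr dotZr -!qfMr => e.
  by rewrite [(l - gE) * _]mulrBl -qE -e.
have h1 : (gA - l) * qf (invmx M) y2 y2 = gR * dotv w2 w2.
  apply: (mulIf (lt0r_neq0 d1p)); rewrite mulrAC -qM hw1 dy2; ring.
have h2 : ((l - gD) * dotv w2 w2 + (l - 1) * qf (invmx M) y2 y2) * qf (invmx N) g g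
    = gK * dotv c c * dotv w2 w2.
  by rewrite -qN hw2 dg.
split.
  by apply: (cubic_alg (lt0r_neq0 d2p) (lt0r_neq0 d3p) h1 h2 h3).
case: Hfin => [[Nneg llt]|gl]; last by right.
left.
have qNn := Nneg w2 w2n; rewrite -/N in qNn.
have gKp : 0 <= gK * dotv c c by rewrite -qK qfRR dot_ge0.
have Gn : qf (invmx N) g g <= 0.
  rewrite leNgt; apply/negP => Gp.
  have : qf N w2 w2 * qf (invmx N) g g < 0 by rewrite nmulr_rlt0.
  by rewrite hw2 dg ltNge mulr_ge0 // ltW.
have : 0 <= (l - gE) * dotv c c by rewrite h3; nra.
by rewrite pmulr_lge0 // subr_ge0.
Qed.

End Core.

Section Regions.
Variable R : realType.

Lemma invb_pos k (M : 'M[R]_k) (t : R) (z : 'cV[R]_k) : M^T = M ->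
  (forall w : 'cV[R]_k, w != 0 -> 0 < qf M w w) ->
  (forall w : 'cV[R]_k, qf M w w <= t * dotv w w) -> z != 0 ->
  0 < qf (invmx M) z z /\ dotv z z <= t * qf (invmx M) z z.
Proof.
move=> MT Mp Mt zn.
have Mu : M \in unitmx by apply: unit_def => w wn; rewrite gt_eqF // Mp.
pose u := invmx M *m z.
have Muz : M *m u = z by rewrite /u mulKVmx.
have un : u != 0 by apply: contraNneq zn => u0; rewrite -Muz u0 mulmx0.
have e1 : qf (invmx M) z z = qf M u u by rewrite [RHS]qfMr Muz dotvC /u mulmxA.
have Qp : 0 < qf (invmx M) z z by rewrite e1 Mp.
split => //.
have Mpsd : forall w : 'cV[R]_k, 0 <= qf M w w.
  move=> w; have [->|wn] := eqVneq w 0; last by rewrite ltW // Mp.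
  by rewrite mulmx0 mxE.
have cs := CS u z MT Mpsd.
rewrite (qfMl _ _ MT) Muz -e1 in cs.
have dzp := dot_gt0 zn.
have h := Mt z.
have : dotv z z ^+ 2 <= qf (invmx M) z z * (t * dotv z z).
  apply: (le_trans cs); rewrite ler_wpM2l // ltW //.
nra.
Qed.

Lemma invb_neg k (M : 'M[R]_k) (t : R) (z : 'cV[R]_k) : M^T = M ->
  0 < t -> (forall w : 'cV[R]_k, qf M w w <= - t * dotv w w) -> z != 0 ->
  qf (invmx M) z z < 0 /\ t * (- qf (invmx M) z z) <= dotv z z.
Proof.
move=> MT tp Mt zn.
have Mn : forall w : 'cV[R]_k, w != 0 -> qf M w w < 0.
  move=> w wn; apply: (le_lt_trans (Mt w)).
  by rewrite mulNr oppr_lt0 mulr_gt0 // dot_gt0.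
have Mu : M \in unitmx by apply: unit_def => w wn; rewrite lt_eqF // Mn.
pose u := invmx M *m z.
have Muz : M *m u = z by rewrite /u mulKVmx.
have un : u != 0 by apply: contraNneq zn => u0; rewrite -Muz u0 mulmx0.
have e1 : qf (invmx M) z z = qf M u u by rewrite [RHS]qfMr Muz dotvC /u mulmxA.
have e2 : qf (invmx M) z z = dotv z u by rewrite -mulmxA.
have Qn : qf (invmx M) z z < 0 by rewrite e1 Mn.
split => //.
have cs := @CS _ _ 1%:M z u (trmx1 _ _) (fun w => ltac:(rewrite mulmx1; exact: dot_ge0)).
rewrite !mulmx1 -e2 in cs.
have hu := Mt u; rewrite -e1 in hu.
have dup := dot_gt0 un.
have dzp := dot_gt0 zn.
set Q := qf (invmx M) z z in Qn cs hu *.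
(* Q^2 <= dz du, t du <= -Q *)
have : t * (Q ^+ 2) <= dotv z z * (- Q).
  apply: (le_trans (ler_wpM2l (ltW tp) cs)).
  rewrite mulrCA ler_wpM2l //; first exact: ltW.
  lra.
nra.
Qed.


Lemma N_lower k1 k2 (Ab : 'M[R]_k1) (Rm : 'M[R]_(k2,k1)) (Db : 'M[R]_k2)
   (gAmin gAmax gDmax gRmin l : R) :
  Ab^T = Ab -> Db^T = Db ->
  (forall w : 'cV[R]_k2, w != 0 -> Rm^T *m w != 0) ->
  (forall w : 'cV[R]_k1, gAmin * dotv w w <= qf Ab w w) ->
  (forall w : 'cV[R]_k1, qf Ab w w <= gAmax * dotv w w) ->
  (forall w : 'cV[R]_k2, 0 <= qf Db w w) ->
  (forall w : 'cV[R]_k2, gRmin * dotv w w <= qf (Rm *m Rm^T) w w) ->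
  0 <= gRmin -> 0 <= gDmax -> gAmin <= 1 <= gAmax -> l < gAmin ->
  l * (gAmax + gRmin + gDmax) < gRmin ->
  (forall w : 'cV[R]_k1, w != 0 -> 0 < qf (Ab - l%:M) w w) /\
  (forall w : 'cV[R]_k2, w != 0 ->
     qf (l%:M - Db + (l - 1) *: (Rm *m invmx (Ab - l%:M) *m Rm^T)) w w < 0).
Proof.
move=> AbT DbT Rinj hAl hAh hD hR gR0 gD0 /andP[gA1 g1A] lA lrho.
have MT : (Ab - l%:M)^T = Ab - l%:M by rewrite linearB /= tr_scalar_mx AbT.
have Mp : forall w : 'cV[R]_k1, w != 0 -> 0 < qf (Ab - l%:M) w w.
  move=> w wn; rewrite qfBm qf_scal; have := hAl w; have := dot_gt0 wn; nra.
have Mt : forall w : 'cV[R]_k1, qf (Ab - l%:M) w w <= (gAmax - l) * dotv w w.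
  by move=> w; rewrite qfBm qf_scal mulrBl; have := hAh w; lra.
split => // w wn.
have zn := Rinj w wn.
have [Qp Qb] := invb_pos MT Mp Mt zn.
rewrite qfDm qfBm qf_scal qfZm qf_conj.
have dp := dot_gt0 wn.
have hd := hD w.
have hr := hR w; rewrite qfRR in hr.
set Q := qf _ (Rm^T *m w) (Rm^T *m w) in Qp Qb *.
set d := dotv w w in dp hr *.
set dz := dotv (Rm^T *m w) (Rm^T *m w) in Qb hr *.
set de := qf Db w w in hd *.
have h1 : (l - 1) * Q < 0 by rewrite nmulr_rlt0 // subr_lt0; lra.
have [l0|l0] := lerP l 0.
  have : l * d <= 0 by rewrite mulr_le0_ge0 // ltW.
  lra.
have A : l * gAmax < (1 - l) * gRmin.
  have : 0 <= l * gDmax by rewrite mulr_ge0 // ltW.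
  move: lrho; rewrite !mulrDr mulrBl mul1r; lra.
have B : (1 - l) * (gRmin * d) <= (1 - l) * ((gAmax - l) * Q).
  by rewrite ler_wpM2l ?subr_ge0 ?(le_trans hr) //; lra.
have C : l * (gAmax - l) * d < (1 - l) * (gAmax - l) * Q.
  have : l * gAmax * d < (1 - l) * gRmin * d by rewrite ltr_pM2r.
  have : 0 <= l * l * d by rewrite mulr_ge0 // ?mulr_ge0 // ltW.
  move: B; rewrite !mulrA; nra.
have gl : 0 < gAmax - l by lra.
have : l * d < (1 - l) * Q.
  move: C; rewrite -!mulrA [(gAmax - l) * d]mulrC [(gAmax - l) * Q]mulrC !mulrA.
  by rewrite ltr_pM2r.
lra.
Qed.

Lemma N_upper k1 k2 (Ab : 'M[R]_k1) (Rm : 'M[R]_(k2,k1)) (Db : 'M[R]_k2)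
   (gAmax gSmax l : R) :
  Ab^T = Ab -> Db^T = Db ->
  (forall w : 'cV[R]_k2, w != 0 -> Rm^T *m w != 0) ->
  (forall w : 'cV[R]_k1, qf Ab w w <= gAmax * dotv w w) ->
  (forall w : 'cV[R]_k2, 0 <= qf Db w w) ->
  (forall w : 'cV[R]_k2, qf (Db + Rm *m Rm^T) w w <= gSmax * dotv w w) ->
  0 <= gSmax -> 1 <= gAmax -> gAmax + gSmax < l ->
  (forall w : 'cV[R]_k1, w != 0 -> qf (Ab - l%:M) w w < 0) /\
  (forall w : 'cV[R]_k2, w != 0 ->
     0 < qf (l%:M - Db + (l - 1) *: (Rm *m invmx (Ab - l%:M) *m Rm^T)) w w).
Proof.
move=> AbT DbT Rinj hAh hD hS gS0 g1A lup.
have MT : (Ab - l%:M)^T = Ab - l%:M by rewrite linearB /= tr_scalar_mx AbT.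
have tp : 0 < l - gAmax by lra.
have Mt : forall w : 'cV[R]_k1, qf (Ab - l%:M) w w <= - (l - gAmax) * dotv w w.
  by move=> w; rewrite qfBm qf_scal opprB mulrBl; have := hAh w; lra.
split.
  move=> w wn; apply: (le_lt_trans (Mt w)).
  by rewrite mulNr oppr_lt0 mulr_gt0 // dot_gt0.
move=> w wn.
have zn := Rinj w wn.
have [Qn Qb] := invb_neg MT tp Mt zn.
rewrite qfDm qfBm qf_scal qfZm qf_conj.
have dp := dot_gt0 wn.
have hd := hD w.
have hs := hS w; rewrite qfDm qfRR in hs.
set Q := qf _ (Rm^T *m w) (Rm^T *m w) in Qn Qb *.
set d := dotv w w in dp hs *.
set dz := dotv (Rm^T *m w) (Rm^T *m w) in Qb hs *.
set de := qf Db w w in hd hs *.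
set x := l - gAmax in tp Qb.
have l1 : 0 < l - 1 by lra.
have B : (l - 1) * (x * - Q) <= (l - 1) * dz by rewrite ler_wpM2l // ltW.
have W : 0 < (l * d - de) * x - (l - 1) * dz.
  have e1 : (l - gSmax) * x > gAmax * gSmax.
    have : gAmax * gSmax <= gAmax * x by rewrite /x; nra.
    have : gAmax * x < (l - gSmax) * x by rewrite /x; nra.
    lra.
  have e2 : 0 < d * ((l - gSmax) * x - gSmax * (gAmax - 1)).
    rewrite mulr_gt0 //; nra.
  have e3 : dz <= gSmax * d by lra.
  have e4 : (l * d - de) * x >= (l * d - gSmax * d + dz) * x by rewrite /x; nra.
  have e5 : (gAmax - 1) * dz <= (gAmax - 1) * (gSmax * d) by nra.
  rewrite /x in e4 e2 *; nra.
have : 0 < (l * d - de + (l - 1) * Q) * x by nra.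
by rewrite pmulr_lgt0.
Qed.

End Regions.

Section CoreL.
Variable R : realType.

Lemma ray_le k (H : 'M[R]_k) (w : 'cV[R]_k) t : w != 0 ->
  qf H w w <= t * dotv w w -> rayleigh H w <= t.
Proof. by move=> wn h; rewrite /rayleigh ler_pdivrMr // dot_gt0. Qed.

Lemma ray_ge k (H : 'M[R]_k) (w : 'cV[R]_k) t : w != 0 ->
  t * dotv w w <= qf H w w -> t <= rayleigh H w.
Proof. by move=> wn h; rewrite /rayleigh ler_pdivlMr // dot_gt0. Qed.

Lemma ray_ge0 k (H : 'M[R]_k) (w : 'cV[R]_k) : 0 <= qf H w w -> 0 <= rayleigh H w.
Proof. by move=> h; rewrite /rayleigh divr_ge0 // dot_ge0. Qed.

Lemma ray_add k (H1 H2 : 'M[R]_k) (w : 'cV[R]_k) :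
  rayleigh (H1 + H2) w = rayleigh H1 w + rayleigh H2 w.
Proof. by rewrite /rayleigh qfDm mulrDl. Qed.


Lemma finish k1 k2 k3 (Ab : 'M[R]_k1) (Rm : 'M[R]_(k2,k1)) (Db : 'M[R]_k2)
  (Km : 'M[R]_(k3,k2)) (Eb : 'M[R]_k3)
  (gAmin gAmax gSmax gXmax gDmax gEmin gRmin l : R)
  (w1 : 'cV[R]_k1) (w2 : 'cV[R]_k2) (w3 : 'cV[R]_k3) :
  w1 != 0 -> w2 != 0 -> w3 != 0 ->
  (forall w : 'cV[R]_k1, qf Ab w w <= gAmax * dotv w w) ->
  (forall w : 'cV[R]_k1, w != 0 -> 0 < qf Ab w w) ->
  (forall w : 'cV[R]_k2, 0 <= qf Db w w) ->
  (forall w : 'cV[R]_k3, 0 <= qf Eb w w) ->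
  (forall w : 'cV[R]_k2, qf (Db + Rm *m Rm^T) w w <= gSmax * dotv w w) ->
  (forall w : 'cV[R]_k3, gEmin * dotv w w <= qf Eb w w) ->
  (forall w : 'cV[R]_k3, qf (Eb + Km *m Km^T) w w <= gXmax * dotv w w) ->
  cub l (rayleigh Ab w1) (rayleigh (Rm *m Rm^T) w2) (rayleigh Db w2)
          (rayleigh (Km *m Km^T) w3) (rayleigh Eb w3) = 0 ->
  (rayleigh Eb w3 <= l \/ gAmin <= l) ->
    let Abar := Ab in
    let Dbar := Db in
    let Ebar := Eb in
    let gA := rayleigh Abar w1 in
    let gR := rayleigh (Rm *m Rm^T) w2 in
    let gD := rayleigh Dbar w2 in
    let gK := rayleigh (Km *m Km^T) w3 in
    let gE := rayleigh Ebar w3 in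
    let gS := gR + gD in
    let gX := gK + gE in
    l ^+ 3 - (gA + gS + gX) * l ^+ 2
      + (gA * gX + gK + gE * gS + gD * gA + gR) * l
      - (gA * gK + gE * gA * gD + gE * gR) = 0 /\
    Num.min gEmin (Num.min gAmin (gRmin / (gAmax + gRmin + gDmax))) <= l
      <= gAmax + gSmax + gXmax.
Proof.
move=> w1n w2n w3n hAh hAp hD hE hS hEm hX hc hdisj.
cbv zeta.
split; first by move: hc; rewrite /cub.
apply/andP; split.
  case: hdisj => h.
    by rewrite ge_min; apply/orP; left; apply: le_trans h; exact: ray_ge w3n (hEm w3).
  by rewrite ge_min ge_min h orbT.
have gAp : 0 <= rayleigh Ab w1 by apply: ray_ge0; exact: ltW (hAp w1 w1n).
have gRp : 0 <= rayleigh (Rm *m Rm^T) w2 by apply: ray_ge0; rewrite qfRR dot_ge0.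
have gDp : 0 <= rayleigh Db w2 by apply: ray_ge0; exact: hD.
have gKp : 0 <= rayleigh (Km *m Km^T) w3 by apply: ray_ge0; rewrite qfRR dot_ge0.
have gEp : 0 <= rayleigh Eb w3 by apply: ray_ge0; exact: hE.
apply: le_trans (cub_ub gAp gRp gDp gKp gEp hc) _.
have := ray_le w1n (hAh w1).
have := ray_le w2n (hS w2); rewrite ray_add.
have := ray_le w3n (hX w3); rewrite ray_add.
lra.
Qed.

Lemma core k1 k2 k3 (Ab : 'M[R]_k1) (Rm : 'M[R]_(k2,k1)) (Db : 'M[R]_k2)
  (Km : 'M[R]_(k3,k2)) (Eb : 'M[R]_k3)
  (gAmin gAmax gSmax gXmax gDmax gEmin gRmin l : R)
  (a : 'cV[R]_k1) (b : 'cV[R]_k2) (c : 'cV[R]_k3) :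
  (0 < k1)%N -> (0 < k2)%N -> Ab^T = Ab -> Db^T = Db -> Eb^T = Eb ->
  (forall w : 'cV[R]_k1, gAmin * dotv w w <= qf Ab w w) ->
  (forall w : 'cV[R]_k1, qf Ab w w <= gAmax * dotv w w) ->
  (forall w : 'cV[R]_k1, w != 0 -> 0 < qf Ab w w) ->
  (forall w : 'cV[R]_k2, 0 <= qf Db w w) ->
  (forall w : 'cV[R]_k3, 0 <= qf Eb w w) ->
  (forall w : 'cV[R]_k2, gRmin * dotv w w <= qf (Rm *m Rm^T) w w) ->
  (forall w : 'cV[R]_k2, w != 0 -> Rm^T *m w != 0) ->
  (forall w : 'cV[R]_k2, qf (Db + Rm *m Rm^T) w w <= gSmax * dotv w w) ->
  (forall w : 'cV[R]_k3, gEmin * dotv w w <= qf Eb w w) ->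
  (forall w : 'cV[R]_k3, qf (Eb + Km *m Km^T) w w <= gXmax * dotv w w) ->
  0 <= gRmin -> 0 <= gDmax -> 0 <= gSmax ->
  gAmin <= 1 <= gAmax ->
  ~ (Num.min gAmin (gRmin / (gAmax + gRmin + gDmax)) <= l <= gAmax + gSmax) ->
  Ab *m a + Rm^T *m b = l *: (a + Rm^T *m b) ->
  Rm *m a - Db *m b + Km^T *m c = l *: (- b + Km^T *m c) ->
  Km *m b + Eb *m c = l *: c ->
  (a != 0) || (b != 0) || (c != 0) ->
  exists (w1 : 'cV[R]_k1) (w2 : 'cV[R]_k2) (w3 : 'cV[R]_k3),
    [/\ w1 != 0, w2 != 0 & w3 != 0] /\
    let Abar := Ab in
    let Dbar := Db in
    let Ebar := Eb in
    let gA := rayleigh Abar w1 in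
    let gR := rayleigh (Rm *m Rm^T) w2 in
    let gD := rayleigh Dbar w2 in
    let gK := rayleigh (Km *m Km^T) w3 in
    let gE := rayleigh Ebar w3 in
    let gS := gR + gD in
    let gX := gK + gE in
    l ^+ 3 - (gA + gS + gX) * l ^+ 2
      + (gA * gX + gK + gE * gS + gD * gA + gR) * l
      - (gA * gK + gE * gA * gD + gE * gR) = 0 /\
    Num.min gEmin (Num.min gAmin (gRmin / (gAmax + gRmin + gDmax))) <= l
      <= gAmax + gSmax + gXmax.
Proof.
move=> k1p k2p AbT DbT EbT hAl hAh hAp hD hE hR Rinj hS hEm hX gR0 gD0 gS0 /andP[gA1 g1A]
  nI S1 S2 S3 nz.
have den : 0 < gAmax + gRmin + gDmax by lra.
have [[lA lrho]|lup] : (l < gAmin /\ l * (gAmax + gRmin + gDmax) < gRmin) \/ gAmax + gSmax < l.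
  case: (boolP (l < Num.min gAmin (gRmin / (gAmax + gRmin + gDmax)))) => [lm|ml].
    move: lm; rewrite lt_min => /andP[h1 h2]; left; split => //.
    by rewrite -ltr_pdivlMr.
  right; rewrite ltNge; apply/negP => h; apply: nI; by rewrite -leNgt in ml; rewrite ml h.
- have [Mp Nn] := N_lower AbT DbT Rinj hAl hAh hD hR gR0 gD0 (introT andP (conj gA1 g1A)) lA lrho.
  have l1 : l != 1 by rewrite lt_eqF // (lt_le_trans lA gA1).
  have [w1 [w2 [w3 [nzs [hc hdisj]]]]] :=
    core_flow (gAmin:=gAmin) k1p k2p AbT DbT EbT l1 Rinj (or_introl Mp) (or_intror Nn)
      (or_introl (conj Nn (lt_le_trans lA gA1))) S1 S2 S3 nz.
  exists w1, w2, w3; split => //.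
  by case: nzs => *; apply: finish.
- have [Mn Np] := N_upper AbT DbT Rinj hAh hD hS gS0 g1A lup.
  have l1g : 1 < l by apply: (le_lt_trans g1A); apply: le_lt_trans lup; rewrite lerDl.
  have l1 : l != 1 by rewrite gt_eqF.
  have gAl : gAmin <= l by apply: (le_trans gA1); exact: ltW.
  have [w1 [w2 [w3 [nzs [hc hdisj]]]]] :=
    core_flow (gAmin:=gAmin) k1p k2p AbT DbT EbT l1 Rinj (or_intror Mn) (or_introl Np)
      (or_intror gAl) S1 S2 S3 nz.
  exists w1, w2, w3; split => //.
  by case: nzs => *; apply: finish.
Qed.

End CoreL.

Section Red.
Variable R : realType.

Lemma eig_swap k (Y Z : 'M[R]_k) mu : Y \in unitmx ->
  eigenvalue (Z *m Y) mu -> eigenvalue (Y *m Z) mu.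
Proof.
move=> Yu /eigenvalueP [v hv vn]; apply/eigenvalueP; exists (v *m invmx Y).
  by rewrite mulmxA mulmxKV // -[v *m Z](mulmxK Yu) -[v *m Z *m Y]mulmxA hv -scalemxAl.
apply: contraNneq vn => h; by rewrite -(mulmxKV Yu v) h mul0mx.
Qed.

Lemma spec_ge k (H : 'M[R]_k) (t : R) : H^T = H ->
  (forall mu, eigenvalue H mu -> t <= mu) ->
  forall x : 'cV[R]_k, t * dotv x x <= qf H x x.
Proof.
move=> HT Heig x.
have NT : (- H)^T = - H by rewrite linearN /= HT.
have := @spec_le R k (- H) (- t) NT _ x.
rewrite qfNm mulNr lerN2; apply => mu /eigenvalueP [v hv vn].
rewrite -lerN2 opprK; apply: Heig; apply/eigenvalueP; exists v => //.
by rewrite scaleNr -hv mulmxN opprK.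
Qed.

Lemma eig_psd k (H : 'M[R]_k) mu : (forall x : 'cV[R]_k, 0 <= qf H x x) ->
  eigenvalue H mu -> 0 <= mu.
Proof.
move=> Hp /eigenvalueP [v hv vn].
have := Hp (v^T); rewrite trmxK hv -scalemxAl mxE.
have vtn : v^T != 0 by rewrite trmx_eq0.
have := dot_gt0 vtn; rewrite trmxK => dp.
by rewrite pmulr_lge0.
Qed.

Lemma sq_inv k (H Y : 'M[R]_k) : H \in unitmx -> Y *m Y = invmx H ->
  Y \in unitmx /\ Y *m H *m Y = 1%:M.
Proof.
move=> Hu YY.
have Yu : Y \in unitmx.
  by have := unitmx_inv H; rewrite Hu -YY unitmx_mul => /andP[].
split => //.
have e : Y *m (Y *m H) = 1%:M by rewrite mulmxA YY mulVmx.
have e2 : Y *m H = invmx Y by rewrite -[Y *m H]mul1mx -(mulVmx Yu) -mulmxA e mulmx1.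
by rewrite e2 mulVmx.
Qed.

Lemma qf_symc k (Y G : 'M[R]_k) (x : 'cV[R]_k) : Y^T = Y ->
  qf (Y *m G *m Y) x x = qf G (Y *m x) (Y *m x).
Proof. by move=> YT; rewrite trmx_mul YT !mulmxA. Qed.

Lemma spd_unit k (H : 'M[R]_k) : spd H -> H \in unitmx.
Proof. by case=> _ Hp; apply: unit_def => w wn; rewrite gt_eqF // Hp. Qed.

End Red.


Unset Implicit Arguments.


Theorem theorem2 (R : realType) (n m p : nat)
  (A : 'M[R]_n) (B : 'M[R]_(m, n)) (C : 'M[R]_(p, m)) (D : 'M[R]_m) (E : 'M[R]_p)
  (Ah : 'M[R]_n) (Sh : 'M[R]_m) (Xh : 'M[R]_p)
  (Ahi : 'M[R]_n) (Shi : 'M[R]_m) (Xhi : 'M[R]_p)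
  (gAmin gAmax gSmax gXmax gDmax gEmin gRmin lambda : R) :
  (0 < n)%N -> (0 < m)%N -> (0 < p)%N -> (m <= n)%N -> (p <= n)%N ->
  spd A -> spd E -> \rank B = m -> \rank C = minn p m -> spsd D ->
  spd Ah -> spd Sh -> spd Xh ->
  is_inv_sqrt Ah Ahi -> is_inv_sqrt Sh Shi -> is_inv_sqrt Xh Xhi ->
  is_lambda_min (invmx Ah *m A) gAmin ->
  is_lambda_max (invmx Ah *m A) gAmax ->
  is_lambda_max (invmx Sh *m (D + B *m invmx Ah *m B^T)) gSmax ->
  is_lambda_max (invmx Xh *m (E + C *m invmx Sh *m C^T)) gXmax ->
  is_lambda_max (invmx Sh *m D) gDmax ->
  is_lambda_min (invmx Xh *m E) gEmin ->
  is_lambda_min ((Shi *m B *m Ahi) *m (Shi *m B *m Ahi)^T) gRmin ->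
  gAmin <= 1 <= gAmax ->
  eigenvalue (calA A B C D E *m invmx (calP Ah B C Sh Xh)) lambda ->
  ~ (Num.min gAmin (gRmin / (gAmax + gRmin + gDmax)) <= lambda <= gAmax + gSmax) ->
  exists (w1 : 'cV[R]_n) (w2 : 'cV[R]_m) (w3 : 'cV[R]_p),
    [/\ w1 != 0, w2 != 0 & w3 != 0] /\
    let Abar := Ahi *m A *m Ahi in
    let Dbar := Shi *m D *m Shi in
    let Ebar := Xhi *m E *m Xhi in
    let Rm := Shi *m B *m Ahi in
    let Km := Xhi *m C *m Shi in
    let gA := rayleigh Abar w1 in
    let gR := rayleigh (Rm *m Rm^T) w2 in
    let gD := rayleigh Dbar w2 in
    let gK := rayleigh (Km *m Km^T) w3 in
    let gE := rayleigh Ebar w3 in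
    let gS := gR + gD in
    let gX := gK + gE in
    lambda ^+ 3 - (gA + gS + gX) * lambda ^+ 2
      + (gA * gX + gK + gE * gS + gD * gA + gR) * lambda
      - (gA * gK + gE * gA * gD + gE * gR) = 0 /\
    Num.min gEmin (Num.min gAmin (gRmin / (gAmax + gRmin + gDmax))) <= lambda
      <= gAmax + gSmax + gXmax.
Proof.
move=> n0 m0 p0 mn pn [AT Ap] [ET Ep] rB rC [DT Dp] spdAh spdSh spdXh
  [[AhiT Ahip] AhiE] [[ShiT Ship] ShiE] [[XhiT Xhip] XhiE]
  [_ minA] [_ maxA] [_ maxS] [_ maxX] [_ maxD] [_ minE] [eR minR] gA1 eig nI.
have Ahu := spd_unit spdAh; have Shu := spd_unit spdSh; have Xhu := spd_unit spdXh.
have [Ahiu AhiI] := sq_inv Ahu AhiE.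
have [Shiu ShiI] := sq_inv Shu ShiE.
have [Xhiu XhiI] := sq_inv Xhu XhiE.
case: spdAh => AhT _; case: spdSh => ShT _; case: spdXh => XhT _.
set Ab := Ahi *m A *m Ahi.
set Rm := Shi *m B *m Ahi.
set Db := Shi *m D *m Shi.
set Km := Xhi *m C *m Shi.
set Eb := Xhi *m E *m Xhi.
have symc : forall k (Y M : 'M[R]_k), Y^T = Y -> M^T = M -> (Y *m M *m Y)^T = Y *m M *m Y.
  by move=> k Y M YT MT; rewrite !trmx_mul YT MT mulmxA.
have AbT : Ab^T = Ab by apply: symc.
have DbT : Db^T = Db by apply: symc.
have EbT : Eb^T = Eb by apply: symc.
have RmT : Rm^T = Ahi *m B^T *m Shi by rewrite /Rm !trmx_mul AhiT ShiT mulmxA.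
have KmT : Km^T = Shi *m C^T *m Xhi by rewrite /Km !trmx_mul XhiT ShiT mulmxA.
have conv : forall k (H Y M : 'M[R]_k) mu, Y *m Y = invmx H -> Y \in unitmx ->
    eigenvalue (Y *m M *m Y) mu -> eigenvalue (invmx H *m M) mu.
  by move=> k H Y M mu YY Yu e; rewrite -YY -mulmxA; apply: eig_swap.
have nz_un : forall k (Y : 'M[R]_k) (w : 'cV[R]_k), Y \in unitmx -> w != 0 -> Y *m w != 0.
  move=> k Y w Yu wn; apply: contraNneq wn => h.
  by rewrite -(mulKmx Yu w) h mulmx0.
have psd_pd : forall k (H : 'M[R]_k), (forall x : 'cV[R]_k, x != 0 -> 0 < qf H x x) ->
    forall x : 'cV[R]_k, 0 <= qf H x x.
  move=> k H Hp x; have [->|xn] := eqVneq x 0; last by rewrite ltW // Hp.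
  by rewrite mulmx0 mxE.
have hAh : forall w : 'cV[R]_n, qf Ab w w <= gAmax * dotv w w.
  apply: spec_le AbT _ => mu e; apply: maxA; exact: conv e.
have hAl : forall w : 'cV[R]_n, gAmin * dotv w w <= qf Ab w w.
  apply: spec_ge AbT _ => mu e; apply: minA; exact: conv e.
have hAp : forall w : 'cV[R]_n, w != 0 -> 0 < qf Ab w w.
  by move=> w wn; rewrite qf_symc // Ap // nz_un.
have hD : forall w : 'cV[R]_m, 0 <= qf Db w w.
  by move=> w; rewrite qf_symc // Dp.
have hE : forall w : 'cV[R]_p, 0 <= qf Eb w w.
  by move=> w; rewrite qf_symc //; apply: psd_pd.
have RRT : (Rm *m Rm^T)^T = Rm *m Rm^T by rewrite trmx_mul trmxK.
have hR : forall w : 'cV[R]_m, gRmin * dotv w w <= qf (Rm *m Rm^T) w w.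
  by apply: spec_ge RRT _.
have rowfB : row_free B by rewrite /row_free rB.
have Rinj : forall w : 'cV[R]_m, w != 0 -> Rm^T *m w != 0.
  move=> w wn; rewrite RmT -!mulmxA; apply: (nz_un _ _ _ Ahiu).
  have sn := nz_un _ _ _ Shiu wn.
  apply: contraNneq sn => h.
  have : (Shi *m w)^T *m B == 0 by rewrite -[B]trmxK -trmx_mul h trmx0.
  by rewrite mulmx_free_eq0 // trmx_eq0 => /eqP ->; rewrite eqxx.
pose St := D + B *m invmx Ah *m B^T.
have StT : St^T = St.
  by rewrite /St linearD /= DT !trmx_mul trmxK trmx_inv AhT mulmxA.
have eS : Db + Rm *m Rm^T = Shi *m St *m Shi.
  by rewrite RmT /Db /Rm /St mulmxDr mulmxDl -AhiE !mulmxA.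
have hS : forall w : 'cV[R]_m, qf (Db + Rm *m Rm^T) w w <= gSmax * dotv w w.
  rewrite eS; apply: spec_le; first by apply: symc.
  by move=> mu e; apply: maxS; exact: conv e.
pose Xt := E + C *m invmx Sh *m C^T.
have XtT : Xt^T = Xt.
  by rewrite /Xt linearD /= ET !trmx_mul trmxK trmx_inv ShT mulmxA.
have eX : Eb + Km *m Km^T = Xhi *m Xt *m Xhi.
  by rewrite KmT /Eb /Km /Xt mulmxDr mulmxDl -ShiE !mulmxA.
have hX : forall w : 'cV[R]_p, qf (Eb + Km *m Km^T) w w <= gXmax * dotv w w.
  rewrite eX; apply: spec_le; first by apply: symc.
  by move=> mu e; apply: maxX; exact: conv e.
have hEm : forall w : 'cV[R]_p, gEmin * dotv w w <= qf Eb w w.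
  apply: spec_ge EbT _ => mu e; apply: minE; exact: conv e.
have gR0 : 0 <= gRmin by apply: eig_psd eR => x; rewrite qfRR dot_ge0.
have [w0 w0n] := nz_vec R m0.
have d0 := dot_gt0 w0n.
have gD0 : 0 <= gDmax.
  have h : qf Db w0 w0 <= gDmax * dotv w0 w0.
    apply: (spec_le DbT _ w0) => mu e; apply: maxD; exact: conv e.
  by rewrite -(pmulr_lge0 _ d0); apply: le_trans h; apply: hD.
have gS0 : 0 <= gSmax.
  have h := hS w0.
  rewrite -(pmulr_lge0 _ d0); apply: le_trans h.
  by rewrite qfDm addr_ge0 // qfRR dot_ge0.
set cA := calA A B C D E.
set cP := calP Ah B C Sh Xh.
have mShu : (- Sh) \in unitmx by rewrite -scaleN1r unitmxZ ?unitrN1.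
have cPu : cP \in unitmx.
  by rewrite unitmxE /cP /calP !det_ublock !unitrM -!unitmxE Ahu mShu Xhu.
have [x xn hx] : exists2 x : 'cV[R]_(n + m + p), x != 0 & cA *m x = lambda *: (cP *m x).
  move/eigenvalueP: eig => [v hv vn].
  have e : v *m cA = lambda *: (v *m cP).
    by rewrite -[v *m cA](mulmxKV cPu) -[v *m cA *m invmx cP]mulmxA hv -scalemxAl.
  have h1 : v *m (cA - lambda *: cP) = 0 by rewrite mulmxBr e -scalemxAr subrr.
  have dd0 : \det (cA - lambda *: cP) == 0 by apply/det0P; exists v.
  have dd1 : \det (cA - lambda *: cP)^T == 0 by rewrite det_tr.
  have [vv vn2 hv2] := det0P dd1.
  exists vv^T; first by rewrite trmx_eq0.
  have : (cA - lambda *: cP) *m vv^T = 0 by rewrite -[cA - _]trmxK -trmx_mul hv2 trmx0.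
  by rewrite mulmxBl -scalemxAl => /eqP; rewrite subr_eq0 => /eqP.
set u := usubmx (usubmx x).
set v := dsubmx (usubmx x).
set z := dsubmx x.
have ex : x = col_mx (col_mx u v) z by rewrite !vsubmxK.
move: hx; rewrite ex /cA /cP /calA /calP !mul_block_col !mul_row_col !mul_col_mx.
rewrite !mul0mx !add_col_mx !add0r !addr0 !scale_col_mx.
move=> /eq_col_mx [/eq_col_mx [E1 E2] E3].
have [a eu] : exists a, u = Ahi *m a by exists (invmx Ahi *m u); rewrite mulKVmx.
have [b ev] : exists b, v = Shi *m b by exists (invmx Shi *m v); rewrite mulKVmx.
have [c ez] : exists c, z = Xhi *m c by exists (invmx Xhi *m z); rewrite mulKVmx.
have S1 : Ab *m a + Rm^T *m b = lambda *: (a + Rm^T *m b).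
  have := congr1 (mulmx Ahi) E1; rewrite eu ev.
  rewrite !mulmxDr -!scalemxAr !mulmxDr !mulmxA AhiI mul1mx => h.
  by rewrite /Ab RmT ?mulmxA.
have S2 : Rm *m a - Db *m b + Km^T *m c = lambda *: (- b + Km^T *m c).
  have := congr1 (mulmx Shi) E2; rewrite eu ev ez.
  rewrite !mulNmx !mulmxDr -!scalemxAr !mulmxDr !mulmxN !mulmxA ShiI mul1mx => h.
  by rewrite /Rm /Db KmT ?mulmxA.
have S3 : Km *m b + Eb *m c = lambda *: c.
  have := congr1 (mulmx Xhi) E3; rewrite ev ez.
  rewrite !mulmxDr -!scalemxAr !mulmxA XhiI mul1mx => h.
  by rewrite /Km /Eb ?mulmxA.
have nz : (a != 0) || (b != 0) || (c != 0).
  have [a0|an] := eqVneq a 0; last by [].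
  have [b0|bn] := eqVneq b 0; last by [].
  have [c0|cn] := eqVneq c 0; last by rewrite orbT.
  by move: xn; rewrite ex eu ev ez a0 b0 c0 !mulmx0 !col_mx0 eqxx.
exact: (core n0 m0 AbT DbT EbT hAl hAh hAp hD hE hR Rinj hS hEm hX gR0 gD0 gS0 gA1 nI S1 S2 S3 nz).
Qed.
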